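(* Let $I=(I_1,\dots,I_d)\in \mathcal I_d$ and $r,s\in [5]$ with $r\neq s$. Assume that the letter $r$ appears exactly once in each of $I_1,\ldots,I_c$ and does not appear in $I_{c+1},\ldots,I_{d}$. Then, for the adjoint action of $L_0$ on $U_-$, $x_s\partial _r. \omega_I=\sum_{b=1}^c \omega_{I^{b,s,r}}$, where $I^{b,s,r}$ is obtained from $I$ by replacing the letter $r$ in $I_b$ by $s$.
   Context: $L=E(5,10)$: even part the divergence-free formal vector fields in $x_1,\dots,x_5$, odd part the closed formal 2-forms; $d_{ij}=dx_i\wedge dx_j$ ($d_{ji}=-d_{ij}$, $d_{ii}=0$), and $[f d_{ij},g d_{kl}]=\varepsilon_{ijkl}fg\partial_{t_{ijkl}}$, where if $|\{i,j,k,l\}|=4$, $t_{ijkl}$ is the fifth element of $[5]$ and $\varepsilon_{ijkl}$ the sign of the permutation $(i,j,k,l,t_{ijkl})$, otherwise $\varepsilon_{ijkl}=0$. $L_0\cong\mathfrak{sl}_5$ is spanned by $x_i\partial_j$ ($i\ne j$) and $x_i\partial_i-x_j\partial_j$, and acts on $U_-=U(L_-)$, $L_-=\langle\partial_i\rangle\oplus\langle d_{ij}\rangle$, by the adjoint action $x.u=xu-ux$ (computed in $U(L)$). $\mathcal I_d$ is the set of $d$-tuples $I=(I_1,\dots,I_d)$ of ordered pairs $I_l=(i_l,j_l)\in[5]^2$; $d_I=d_{i_1j_1}\cdots d_{i_dj_d}$. For $k\neq l$ in $[d]$, $D_{\{k,l\}}(I)=\tfrac12(-1)^{k+l}\varepsilon_{i_kj_ki_lj_l}\partial_{t_{i_kj_ki_lj_l}}$.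 $\mathrm{SIF}_d$ is the set of sets $S$ of pairwise disjoint 2-element subsets of $[d]$; two disjoint pairs $\{k,l\},\{h,m\}$ cross if exactly one of $k,l$ is strictly between $h$ and $m$; $c(S)$ is the number of crossing pairs in $S$. $D_S(I)=\prod_{P\in S}D_P(I)$ ($D_\emptyset=1$), $C_S(I)$ is $I$ with all $I_j$, $j\in\bigcup S$, deleted, and $\omega_I=\sum_{S\in \mathrm{SIF}_d}(-1)^{c(S)}D_S(I)\,d_{C_S(I)}\in U_-$. *)

(* Defs.v *)
From HB Require Import structures.
From mathcomp Require Import all_boot all_order all_algebra.
Set Implicit Arguments. Unset Strict Implicit. Unset Printing Implicit Defensive.
Import Order.TTheory GRing.Theory Num.Theory.

(* Letters [5] = 'I_5 ; positions [d] = {0,...,d-1} (0-based).         *)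

Definition letter := 'I_5.
Definition lpair := (letter * letter)%type.
Definition p0 : lpair := (ord0, ord0).

Definition inversions (w : seq letter) : nat :=
  let v := map val w in
  size [seq ab <- allpairs pair (iota 0 (size v)) (iota 0 (size v))
       | (ab.1 < ab.2) && (nth 0 v ab.2 < nth 0 v ab.1)].

(* t_{ijkl}: the fifth element of [5] (meaningful when i,j,k,l distinct) *)
Definition tfifth (i j k l : letter) : letter :=
  odflt ord0 [pick x : letter | x \notin [:: i; j; k; l]].

Definition eps (i j k l : letter) : rat :=
  if uniq [:: i; j; k; l]
  then ((-1) ^+ (inversions [:: i; j; k; l; tfifth i j k l]))%R
  else 0%R.

(* The enveloping algebra U(g) of the Lie superalgebra                 *)
(*   g = span(x_s d_r) (+) L_-  (a subalgebra of L = E(5,10)),         *)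
(* presented as the tensor algebra on generators modulo the usual      *)
(* relations  a b - (-1)^{|a||b|} b a = [a,b].  Base field: Q.          *)

Inductive gen :=
| GD of letter            (* \partial_i  (even, degree -2)          *)
| GF of letter & letter   (* d_{ij} = dx_i /\ dx_j (odd, degree -1) *)
| GX.                     (* x_s \partial_r (even, in L_0)           *)

Inductive term :=
| tgen of gen
| tc of rat
| tadd of term & term
| tmul of term & term.

Definition tneg (a : term) := tmul (tc (-1)%R) a.
Definition tsub (a b : term) := tadd a (tneg b).
Definition tsum (s : seq term) := foldr tadd (tc 0%R) s.
Definition tprod (s : seq term) := foldr tmul (tc 1%R) s.

Definition Dp (i : letter) := tgen (GD i).
Definition Fd (i j : letter) := tgen (GF i j).
Definition Xg := tgen GX.

Definition kd (a b : letter) : rat := ((a == b)%:R)%R.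

(* Defining relations of U(g), with X = x_s \partial_r:
   [\partial_i,\partial_j] = 0, [\partial_i, d_kl] = 0,
   [d_ij, d_kl] = d_ij d_kl + d_kl d_ij = eps_{ijkl} \partial_{t_{ijkl}},
   d_ji = - d_ij,
   [x_s\partial_r, \partial_i] = - delta_{is} \partial_r,
   [x_s\partial_r, d_ij] = L_{x_s \partial_r}(dx_i/\dx_j)
                         = delta_{ri} d_sj + delta_{rj} d_is
   (divergence of x_s\partial_r is 0 since r <> s). *)
Inductive urel (s r : letter) : term -> term -> Prop :=
| rel_DD i j : urel s r (tmul (Dp i) (Dp j)) (tmul (Dp j) (Dp i))
| rel_DF i k l : urel s r (tmul (Dp i) (Fd k l)) (tmul (Fd k l) (Dp i))
| rel_FF i j k l :
    urel s r (tadd (tmul (Fd i j) (Fd k l)) (tmul (Fd k l) (Fd i j)))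
             (tmul (tc (eps i j k l)) (Dp (tfifth i j k l)))
| rel_Fanti i j : urel s r (Fd j i) (tneg (Fd i j))
| rel_XD i : urel s r (tsub (tmul Xg (Dp i)) (tmul (Dp i) Xg))
                      (tmul (tc (- kd i s)%R) (Dp r))
| rel_XF i j : urel s r (tsub (tmul Xg (Fd i j)) (tmul (Fd i j) Xg))
                        (tadd (tmul (tc (kd r i)) (Fd s j))
                              (tmul (tc (kd r j)) (Fd i s))).

Inductive ueq (s r : letter) : term -> term -> Prop :=
| ueq_refl a : ueq s r a a
| ueq_sym a b : ueq s r a b -> ueq s r b a
| ueq_trans a b c : ueq s r a b -> ueq s r b c -> ueq s r a c
| ueq_add a a' b b' : ueq s r a a' -> ueq s r b b' ->
    ueq s r (tadd a b) (tadd a' b')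
| ueq_mul a a' b b' : ueq s r a a' -> ueq s r b b' ->
    ueq s r (tmul a b) (tmul a' b')
| ueq_addA a b c : ueq s r (tadd a (tadd b c)) (tadd (tadd a b) c)
| ueq_addC a b : ueq s r (tadd a b) (tadd b a)
| ueq_add0 a : ueq s r (tadd (tc 0%R) a) a
| ueq_addN a : ueq s r (tadd a (tneg a)) (tc 0%R)
| ueq_mulA a b c : ueq s r (tmul a (tmul b c)) (tmul (tmul a b) c)
| ueq_mul1l a : ueq s r (tmul (tc 1%R) a) a
| ueq_mul1r a : ueq s r (tmul a (tc 1%R)) a
| ueq_mulDl a b c : ueq s r (tmul (tadd a b) c) (tadd (tmul a c) (tmul b c))
| ueq_mulDr a b c : ueq s r (tmul a (tadd b c)) (tadd (tmul a b) (tmul a c))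
| ueq_cadd x y : ueq s r (tadd (tc x) (tc y)) (tc (x + y)%R)
| ueq_cmul x y : ueq s r (tmul (tc x) (tc y)) (tc (x * y)%R)
| ueq_ccomm x a : ueq s r (tmul (tc x) a) (tmul a (tc x))
| ueq_rel a b : urel s r a b -> ueq s r a b.

(* the two elements of a 2-subset P of [d], as naturals (lo < hi) *)
Definition plo d (P : {set 'I_d}) : nat := head 0 [seq val x | x <- enum P].
Definition phi d (P : {set 'I_d}) : nat := last 0 [seq val x | x <- enum P].

Definition SIF d : {set {set {set 'I_d}}} :=
  [set S : {set {set 'I_d}} |
     [forall P in S, #|P| == 2] &&
     [forall P in S, forall Q in S, (P != Q) ==> [disjoint P & Q]]].

Definition strictly_between (x h m : nat) := (minn h m < x) && (x < maxn h m).

Definition crossing d (P Q : {set 'I_d}) : bool :=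
  strictly_between (plo P) (plo Q) (phi Q) (+)
  strictly_between (phi P) (plo Q) (phi Q).

Definition ncross d (S : {set {set 'I_d}}) : nat :=
  #|[set PQ in setX S S | (plo PQ.1 < plo PQ.2) && crossing PQ.1 PQ.2]|.

Definition Dpair (I : seq lpair) (k l : nat) : term :=
  let a := nth p0 I k in let b := nth p0 I l in
  tmul (tc ((1/2) * (-1) ^+ (k + l) * eps a.1 a.2 b.1 b.2)%R)
       (Dp (tfifth a.1 a.2 b.1 b.2)).

Definition covered d (S : {set {set 'I_d}}) (j : nat) : bool :=
  [exists P in S, [exists x in P, val x == j]].

Definition CS (I : seq lpair) (S : {set {set 'I_(size I)}}) : seq lpair :=
  [seq nth p0 I j | j <- iota 0 (size I) & ~~ covered S j].

Definition dword (I : seq lpair) : term := tprod [seq Fd p.1 p.2 | p <- I].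

Definition omega (I : seq lpair) : term :=
  tsum [seq tmul (tc ((-1) ^+ ncross SS)%R)
              (tmul (tprod [seq Dpair I (plo P) (phi P) | P <- enum SS])
                    (dword (CS SS)))
       | SS <- enum (SIF (size I))].

(* I^{b,s,r}: replace the letter r in I_b by s (b 0-based) *)
Definition repl_letter (s r : letter) (p : lpair) : lpair :=
  (if p.1 == r then s else p.1, if p.2 == r then s else p.2).
Definition Ibsr (I : seq lpair) (b : nat) (s r : letter) : seq lpair :=
  set_nth p0 I b (repl_letter s r (nth p0 I b)).

(* Main.v *)
From HB Require Import structures.
Require Import Defs.
From mathcomp Require Import all_boot all_order all_algebra.
From mathcomp Require Import boolp.
From mathcomp Require Import ring.
Set Implicit Arguments. Unset Strict Implicit. Unset Printing Implicit Defensive.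
Import Order.TTheory GRing.Theory Num.Theory.


Definition invN (v : seq nat) : nat :=
  size [seq ab <- allpairs pair (iota 0 (size v)) (iota 0 (size v))
       | (ab.1 < ab.2) && (nth 0 v ab.2 < nth 0 v ab.1)].
Definition tfN (i j k l : nat) : nat := head 0 [seq x <- iota 0 5 | x \notin [:: i; j; k; l]].
Definition epsZ (i j k l : nat) : int :=
  if uniq [:: i; j; k; l] then ((-1) ^+ (invN [:: i; j; k; l; tfN i j k l]))%R else 0%R.
Definition kdZ (a b : nat) : int := (a == b)%:R%R.
Definition replN (s r : nat) (p : nat * nat) :=
  (if p.1 == r then s else p.1, if p.2 == r then s else p.2).
Definition xorN (p : nat * nat) r := (p.1 == r) (+) (p.2 == r).

Definition chk_case (a1 a2 b1 b2 r s x : nat) : bool :=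
  let t := tfN a1 a2 b1 b2 in
  let A := replN s r (a1, a2) in
  let B := replN s r (b1, b2) in
  (kdZ x r * (- (kdZ s t * epsZ a1 a2 b1 b2)) ==
   (xorN (a1,a2) r)%:R * (kdZ x (tfN A.1 A.2 b1 b2) * epsZ A.1 A.2 b1 b2) +
   (xorN (b1,b2) r)%:R * (kdZ x (tfN a1 a2 B.1 B.2) * epsZ a1 a2 B.1 B.2))%R.

Definition L5 := iota 0 5.
Definition chk := all (fun a1 => all (fun a2 => all (fun b1 => all (fun b2 =>
  all (fun r => all (fun s => (r == s) || all (fun x => chk_case a1 a2 b1 b2 r s x) L5) L5) L5) L5) L5) L5) L5.
Definition chk2 := all (fun a1 => all (fun a2 => all (fun b1 => all (fun b2 =>
   (uniq [:: a1; a2; b1; b2]) ==> ((tfN a1 a2 b1 b2 < 5) && (tfN a1 a2 b1 b2 \notin [:: a1; a2; b1; b2]))) L5) L5) L5) L5.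

Lemma chkT : chk. Proof. vm_compute. reflexivity. Qed.
Lemma chk2T : chk2. Proof. vm_compute. reflexivity. Qed.

Lemma inL5 n : (n < 5)%N -> n \in L5. Proof. by rewrite mem_iota. Qed.

Lemma allPi (T : eqType) (p : pred T) (l : seq T) x : all p l -> x \in l -> p x.
Proof. by move=> /allP; apply. Qed.

Lemma chk_all (a1 a2 b1 b2 r s x : nat) : a1 \in L5 -> a2 \in L5 -> b1 \in L5 -> b2 \in L5 ->
  r \in L5 -> s \in L5 -> x \in L5 -> (r == s) = false -> chk_case a1 a2 b1 b2 r s x.
Proof.
move=> h1 h2 h3 h4 h5 h6 h7 rs.
have H0 := allPi (allPi (allPi (allPi (allPi (allPi chkT h1) h2) h3) h4) h5) h6.
move: H0; rewrite rs orFb => H0.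
exact: allPi H0 h7.
Qed.

Lemma size_enum5 : size (enum 'I_5) = 5. Proof. by rewrite size_enum_ord. Qed.

Lemma tfifthE (a b c d : letter) : uniq [:: a; b; c; d] ->
  val (tfifth a b c d) = tfN (val a) (val b) (val c) (val d).
Proof.
move=> U.
have U' : uniq [:: val a; val b; val c; val d] by rewrite -(map_inj_uniq val_inj) in U.
have Hc := chk2T; rewrite /chk2 in Hc.
have /andP[lt5 nin] : (tfN (val a) (val b) (val c) (val d) < 5) && (tfN (val a) (val b) (val c) (val d) \notin [:: val a; val b; val c; val d]).
  move/allP: Hc => /(_ (val a)); rewrite mem_iota ltn_ord => /(_ isT).
  move/allP => /(_ (val b)); rewrite mem_iota ltn_ord => /(_ isT).
  move/allP => /(_ (val c)); rewrite mem_iota ltn_ord => /(_ isT).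
  move/allP => /(_ (val d)); rewrite mem_iota ltn_ord => /(_ isT).
  by rewrite U'.
set y : letter := Ordinal lt5.
have ny : y \notin [:: a; b; c; d].
  apply: contra nin => H; exact: (map_f val H).
rewrite /tfifth; case: pickP => [x Hx | H]; last by move: (H y); rewrite ny.
suff -> : x = y by [].
apply/eqP; apply/negPn/negP => nxy.
have U6 : uniq [:: x; y; a; b; c; d].
  rewrite [uniq _]/= in_cons negb_or nxy Hx ny.
  exact: U.
have := uniq_leq_size U6 (fun z _ => mem_ord_enum z).
rewrite (_ : size (ord_enum 5) = 5) //; by rewrite -(size_map val) val_ord_enum size_iota.
Qed.
Local Open Scope ring_scope.

Lemma epsE (a b c d : letter) : eps a b c d = (epsZ (val a) (val b) (val c) (val d))%:~R.
Proof.
rewrite /eps /epsZ.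
have -> : uniq [:: a; b; c; d] = uniq [:: val a; val b; val c; val d].
  by rewrite -(map_inj_uniq val_inj).
case: ifP => U; last by [].
have U0 : uniq [:: a; b; c; d] by rewrite -(map_inj_uniq val_inj).
rewrite (_ : inversions _ = invN [:: val a; val b; val c; val d; tfN (val a) (val b) (val c) (val d)]).
  by rewrite rmorphXn /= rmorphN1.
by rewrite /inversions [map _ _]/= (tfifthE U0).
Qed.

Lemma kdE (a b : letter) : kd a b = (kdZ (val a) (val b))%:~R.
Proof. rewrite /kd /kdZ -(inj_eq val_inj). by case: (val a == val b). Qed.

Lemma natE (b : bool) : (b%:R : rat) = ((b%:R : int))%:~R.
Proof. by case: b. Qed.

Lemma kd_epsE (x a b c d : letter) : kd x (tfifth a b c d) * eps a b c d =
  (kdZ (val x) (tfN (val a) (val b) (val c) (val d)) * epsZ (val a) (val b) (val c) (val d))%:~R.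
Proof.
case U: (uniq [:: a; b; c; d]).
  by rewrite intrM kdE epsE (tfifthE U).
have U' : uniq [:: val a; val b; val c; val d] = false by rewrite -U -(map_inj_uniq val_inj).
by rewrite /eps /epsZ U U' !mulr0.
Qed.

Definition xorr (p : lpair) (r : letter) : bool := (p.1 == r) (+) (p.2 == r).

Lemma eps_ident (a1 a2 b1 b2 r s x : letter) : r != s ->
  let A := repl_letter s r (a1, a2) in let B := repl_letter s r (b1, b2) in
  kd x r * (- (kd s (tfifth a1 a2 b1 b2) * eps a1 a2 b1 b2)) =
  (xorr (a1, a2) r)%:R * (kd x (tfifth A.1 A.2 b1 b2) * eps A.1 A.2 b1 b2) +
  (xorr (b1, b2) r)%:R * (kd x (tfifth a1 a2 B.1 B.2) * eps a1 a2 B.1 B.2).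
Proof.
move=> rs A B.
have Hv : forall z : letter, val z \in L5 by move=> z; apply: inL5; exact: ltn_ord.
have rs' : (val r == val s) = false by apply/negbTE.
have := chk_all (Hv a1) (Hv a2) (Hv b1) (Hv b2) (Hv r) (Hv s) (Hv x) rs'.
rewrite /chk_case /= => /eqP H.
rewrite kdE !kd_epsE !natE -intrN -!intrM -intrD.
rewrite /A /B /repl_letter /= !(fun_if val) /xorr /=.
exact: (congr1 (fun z : int => z%:~R) H).
Qed.

Section Quot.
Variables s r : letter.
Local Notation "a ~ b" := (ueq s r a b) (at level 70).

Lemma ueq_symm a b : a ~ b -> b ~ a. Proof. exact: ueq_sym. Qed.

Definition Q := {A : term -> Prop | exists a, A = ueq s r a}.
HB.instance Definition _ := gen_eqMixin Q.
HB.instance Definition _ := gen_choiceMixin Q.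

Definition cls : term -> Q := locked (fun a => exist _ (ueq s r a) (ex_intro _ a erefl)).
Definition rep (q : Q) : term := projT1 (cid (proj2_sig q)).

Lemma clsP a b : a ~ b -> cls a = cls b.
Proof.
unlock cls.
move=> h; apply: eq_exist_uncurried.
have e : ueq s r a = ueq s r b.
  apply: funext => x; apply: propext; split => hx.
    exact: ueq_trans (ueq_sym h) hx.
  exact: ueq_trans h hx.
by exists e; apply: Prop_irrelevance.
Qed.

Lemma clsK a b : cls a = cls b -> a ~ b.
Proof.
move=> h; have : proj1_sig (cls a) b by rewrite h; unlock cls; exact: ueq_refl.
by unlock cls.
Qed.

Lemma repK q : cls (rep q) = q.
Proof.
unlock cls.
rewrite /rep; case: q => A HA /=; case: (cid HA) => a /= e.
by apply: eq_exist_uncurried; exists (esym e); apply: Prop_irrelevance.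
Qed.

Lemma rep_cls a : rep (cls a) ~ a.
Proof. by apply: clsK; rewrite repK. Qed.

Definition qadd : Q -> Q -> Q := locked (fun p q => cls (tadd (rep p) (rep q))).
Definition qmul : Q -> Q -> Q := locked (fun p q => cls (tmul (rep p) (rep q))).
Definition qopp : Q -> Q := locked (fun p => cls (tneg (rep p))).
Definition qc x := cls (tc x).

Lemma qaddE a b : qadd (cls a) (cls b) = cls (tadd a b).
Proof. unlock qadd; by apply: clsP; apply: ueq_add; apply: rep_cls. Qed.
Lemma qmulE a b : qmul (cls a) (cls b) = cls (tmul a b).
Proof. unlock qmul; by apply: clsP; apply: ueq_mul; apply: rep_cls. Qed.
Lemma qoppE a : qopp (cls a) = cls (tneg a).
Proof. unlock qopp; by apply: clsP; apply: ueq_mul; [apply: ueq_refl|apply: rep_cls]. Qed.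

Ltac qelim := repeat (let q := fresh "q" in move=> q; rewrite -(repK q));
   rewrite ?qoppE ?qaddE ?qmulE ?qaddE /qc; apply: clsP.

Lemma qaddA : associative qadd. Proof. qelim; exact: ueq_addA. Qed.
Lemma qaddC : commutative qadd. Proof. qelim; exact: ueq_addC. Qed.
Lemma qadd0 : left_id (qc 0) qadd. Proof. qelim; exact: ueq_add0. Qed.
Lemma qaddN : left_inverse (qc 0) qopp qadd.
Proof. qelim. apply: (ueq_trans (ueq_addC _ _ _ _)). exact: ueq_addN. Qed.
Lemma qmulA : associative qmul. Proof. qelim; exact: ueq_mulA. Qed.
Lemma qmul1 : left_id (qc 1) qmul. Proof. qelim; exact: ueq_mul1l. Qed.
Lemma qmul1r : right_id (qc 1) qmul. Proof. qelim; exact: ueq_mul1r. Qed.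
Lemma qmulDl : left_distributive qmul qadd. Proof. qelim; exact: ueq_mulDl. Qed.
Lemma qmulDr : right_distributive qmul qadd. Proof. qelim; exact: ueq_mulDr. Qed.

HB.instance Definition _ := GRing.isPzRing.Build Q qaddA qaddC qadd0 qaddN
  qmulA qmul1 qmul1r qmulDl qmulDr.

Local Open Scope ring_scope.
Lemma clsD a b : cls (tadd a b) = cls a + cls b. Proof. by rewrite -qaddE. Qed.
Lemma clsM a b : cls (tmul a b) = cls a * cls b. Proof. by rewrite -qmulE. Qed.
Lemma cls0 : cls (tc 0) = 0. Proof. by []. Qed.
Lemma cls1 : cls (tc 1) = 1. Proof. by []. Qed.


Local Notation C x := (cls (tc x)).
Local Notation D i := (cls (Dp i)).
Local Notation F i j := (cls (Fd i j)).
Local Notation X := (cls Xg).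

Lemma CD x y : C x + C y = C (x + y). Proof. by rewrite -clsD; apply: clsP; apply: ueq_cadd. Qed.
Lemma CM x y : C x * C y = C (x * y). Proof. by rewrite -clsM; apply: clsP; apply: ueq_cmul. Qed.
Lemma Ccomm x q : C x * q = q * C x.
Proof. by rewrite -(repK q) -!clsM; apply: clsP; apply: ueq_ccomm. Qed.
Lemma CN x : C (- x) = - C x.
Proof. by apply/eqP; rewrite -subr_eq0 opprK CD addNr. Qed.
Lemma CB x y : C (x - y) = C x - C y. Proof. by rewrite -CD CN. Qed.
Lemma clsN a : cls (tneg a) = - cls a.
Proof. by rewrite /tneg clsM CN cls1 mulN1r. Qed.
Lemma clsB a b : cls (tsub a b) = cls a - cls b.
Proof. by rewrite /tsub clsD clsN. Qed.
Lemma clsS l : cls (tsum l) = \sum_(a <- l) cls a.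
Proof. elim: l => [|a l IH] /=; first by rewrite big_nil. by rewrite big_cons clsD IH. Qed.
Lemma clsP_ l : cls (tprod l) = \prod_(a <- l) cls a.
Proof. elim: l => [|a l IH] /=; first by rewrite big_nil. by rewrite big_cons clsM IH. Qed.

Definition ad (q : Q) := X * q - q * X.
Lemma adD p q : ad (p + q) = ad p + ad q.
Proof. rewrite /ad mulrDl mulrDr opprD !addrA; congr (_ + _); rewrite -!addrA; congr (_ + _); by rewrite addrC. Qed.
Lemma ad0 : ad 0 = 0. Proof. by rewrite /ad mulr0 mul0r subrr. Qed.
Lemma ad1 : ad 1 = 0. Proof. by rewrite /ad mulr1 mul1r subrr. Qed.
Lemma adM p q : ad (p * q) = ad p * q + p * ad q.
Proof.
rewrite /ad mulrBl mulrBr !mulrA addrA; congr (_ - _).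
by rewrite subrK.
Qed.
Lemma adC x : ad (C x) = 0. Proof. by rewrite /ad Ccomm subrr. Qed.
Lemma adCM x q : ad (C x * q) = C x * ad q. Proof. by rewrite adM adC mul0r add0r. Qed.
Lemma ad_sum (I0 : Type) (l : seq I0) (P : pred I0) (f : I0 -> Q) :
  ad (\sum_(i <- l | P i) f i) = \sum_(i <- l | P i) ad (f i).
Proof. exact: (big_morph ad adD ad0). Qed.

Lemma adDp i : ad (D i) = C (- kd i s) * D r.
Proof. by rewrite /ad -!clsM -clsB; apply: clsP; apply: ueq_rel; apply: rel_XD. Qed.
Lemma adFd i j : ad (F i j) = C (kd r i) * F s j + C (kd r j) * F i s.
Proof. have H := clsP (ueq_rel (rel_XF s r i j)). by rewrite clsB !clsM clsD !clsM in H. Qed.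

End Quot.

Local Open Scope ring_scope.
Section Quot.
Variables s r : letter.
Local Notation C x := (cls s r (tc x)).
Local Notation D i := (cls s r (Dp i)).
Local Notation F i j := (cls s r (Fd i j)).
Local Notation X := (cls s r Xg).
Local Notation Q := (Q s r).
Local Notation ad := (@ad s r).
Local Notation cls := (cls s r).

Lemma kdC (a b : letter) : kd a b = kd b a. Proof. by rewrite /kd eq_sym. Qed.

Lemma CexpD a t : C a * D t = \sum_(x : letter) C (a * kd x t) * D x.
Proof.
rewrite (bigD1 t) //= /kd eqxx mulr1 big1 ?addr0 // => x /negbTE ->.
by rewrite mulr0 cls0 mul0r.
Qed.

Lemma ring_aux (h xa xb k1 e1 k2 e2 : rat) :
  h * (xa * (k1 * e1) + xb * (k2 * e2)) = xa * (h * e1) * k1 + xb * (h * e2) * k2.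
Proof. ring. Qed.

Lemma CMA a b q : C a * (C b * q) = C (a * b) * q.
Proof. by rewrite mulrA CM. Qed.

Lemma adDq (pa pb : lpair) (h : rat) : r != s ->
  let pa' := repl_letter s r pa in let pb' := repl_letter s r pb in
  ad (C (h * eps pa.1 pa.2 pb.1 pb.2) * D (tfifth pa.1 pa.2 pb.1 pb.2)) =
  C (xorr pa r)%:R * (C (h * eps pa'.1 pa'.2 pb.1 pb.2) * D (tfifth pa'.1 pa'.2 pb.1 pb.2)) +
  C (xorr pb r)%:R * (C (h * eps pa.1 pa.2 pb'.1 pb'.2) * D (tfifth pa.1 pa.2 pb'.1 pb'.2)).
Proof.
case: pa => a1 a2; case: pb => b1 b2 rs /=.
rewrite adCM adDp [LHS]CMA [X in _ = X + _]CMA [X in _ = _ + X]CMA.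
rewrite [LHS]CexpD [X in _ = X + _]CexpD [X in _ = _ + X]CexpD -big_split /=.
apply: eq_bigr => x _; rewrite -mulrDl CD; congr (C _ * _).
have E := eps_ident a1 a2 b1 b2 x rs; rewrite /= in E.
rewrite (kdC (tfifth _ _ _ _) s).
transitivity (h * (kd x r * - (kd s (tfifth a1 a2 b1 b2) * eps a1 a2 b1 b2))); first by ring.
by rewrite E; apply: ring_aux.
Qed.

Definition Fq (p : lpair) := F p.1 p.2.

Lemma adFq a b : xorr (a, b) r -> ad (F a b) = F (if a == r then s else a) (if b == r then s else b).
Proof.
rewrite adFd /kd /xorr /= ![r == _]eq_sym.
case: (a =P r) => [->|_]; case: (b =P r) => [->|_] //= _;
  by rewrite ?mulr1n ?mulr0n ?cls0 ?cls1 ?mul0r ?mul1r ?addr0 ?add0r.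
Qed.

Lemma adFq0 a b : a != r -> b != r -> ad (F a b) = 0.
Proof.
rewrite adFd /kd ![r == _]eq_sym => /negbTE -> /negbTE ->.
by rewrite ?mulr0n ?cls0 ?mul0r ?addr0.
Qed.

Lemma ad_prod (A : eqType) (f : seq lpair -> A -> Q) (supp : A -> seq nat)
   (I : seq lpair) (J : nat -> seq lpair) (L : seq nat) (xs : seq A) :
  (forall x, x \in xs -> ad (f I x) = \sum_(b <- L | b \in supp x) f (J b) x) ->
  (forall x, x \in xs -> forall b, b \notin supp x -> f (J b) x = f I x) ->
  (forall b, (count (fun x => b \in supp x) xs <= 1)%N) ->
  ad (\prod_(x <- xs) f I x) =
  \sum_(b <- L | has (fun x => b \in supp x) xs) \prod_(x <- xs) f (J b) x.
Proof.
elim: xs => [|x xs IH] H1 H2 H3.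
  by rewrite big_nil ad1 big_pred0.
have H1' : forall y, y \in xs -> ad (f I y) = \sum_(b <- L | b \in supp y) f (J b) y.
  by move=> y yx; apply: H1; rewrite in_cons yx orbT.
have H2' : forall y, y \in xs -> forall b, b \notin supp y -> f (J b) y = f I y.
  by move=> y yx; apply: H2; rewrite in_cons yx orbT.
have H3' : forall b, (count (fun x => b \in supp x) xs <= 1)%N.
  by move=> b; apply: leq_trans (H3 b); rewrite /= leq_addl.
have Hdis : forall b, has (fun x => b \in supp x) xs -> b \notin supp x.
  move=> b; rewrite has_count => hc; apply/negP => hb.
  by have := H3 b; rewrite /= hb add1n ltnS leqNgt hc.
rewrite big_cons adM (H1 x (mem_head _ _)) (IH H1' H2' H3') mulr_suml mulr_sumr.
rewrite [RHS](bigID (fun b => b \in supp x)) /=.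
congr (_ + _).
  apply: eq_big => [b|b hb]; first by case: (b \in supp x); rewrite ?andbT ?andbF.
  rewrite big_cons; congr (_ * _); apply: eq_big_seq => y yx; apply/esym; apply: H2' => //.
  apply/negP => hby; have := H3 b; rewrite /= hb add1n ltnS leqn0 => /eqP c0.
  have : has (fun x => b \in supp x) xs by apply/hasP; exists y.
  by rewrite has_count c0.
apply: eq_big => [b|b hb].
  case hb: (has _ xs); last by rewrite orbF andbN.
  by rewrite orbT (Hdis b hb).
by rewrite big_cons (H2 x (mem_head _ _) b (Hdis b hb)).
Qed.

Lemma sum_eq1 (g : nat -> Q) (L : seq nat) k : uniq L ->
  \sum_(b <- L | b == k) g b = if k \in L then g k else 0.
Proof.
move=> uL; case: ifP => kL.
  rewrite big_mkcond (bigD1_seq k) //= eqxx big1 ?addr0 // => b /negbTE bk.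
  by rewrite bk.
rewrite big_seq_cond big_pred0 // => b; apply/andP => -[bL /eqP bk].
by rewrite -bk bL in kL.
Qed.

Lemma sum_in1 (g : nat -> Q) (L : seq nat) k : uniq L ->
  \sum_(b <- L | b \in [:: k]) g b = if k \in L then g k else 0.
Proof. by move=> uL; rewrite -sum_eq1 //; apply: eq_bigl => b; rewrite mem_seq1. Qed.

Lemma sum_in2 (g : nat -> Q) (L : seq nat) k l : uniq L -> k != l ->
  \sum_(b <- L | b \in [:: k; l]) g b =
  (if k \in L then g k else 0) + (if l \in L then g l else 0).
Proof.
move=> uL kl; rewrite (bigID (fun b => b == k)) /= -!sum_eq1 //.
congr (_ + _); apply: eq_bigl => b; rewrite !inE.
  by case: (b =P k); rewrite ?andbT ?andbF ?orbT.
case: (b =P k) => [->|_] /=; last by rewrite andbT.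
by rewrite (negbTE kl).
Qed.

Lemma count_le1 (T : eqType) (p : pred T) (l : seq T) : uniq l ->
  {in l &, forall x y, p x -> p y -> x = y} -> (count p l <= 1)%N.
Proof.
elim: l => [|x l IH] //= /andP[xl ul] H.
have Hl : forall y, y \in l -> y \in x :: l by move=> y yl; rewrite in_cons yl orbT.
case px: (p x) => /=.
  have : ~~ has p l.
    apply/hasPn => y yl; apply/negP => py.
    have exy := H x y (mem_head _ _) (Hl y yl) px py.
    by rewrite exy yl in xl.
  by rewrite has_count -leqNgt add1n ltnS.
apply: IH => // y z yl zl; apply: H; exact: Hl.
Qed.

Section Comb.
Variable n : nat.
Variable SS : {set {set 'I_n}}.
Hypothesis HS : SS \in SIF n.

Lemma SIF_card P : P \in SS -> #|P| = 2.
Proof.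
move: HS; rewrite inE => /andP[/forallP H1 _] PS.
by move: (H1 P); rewrite PS => /eqP.
Qed.

Lemma SIF_disj P Q : P \in SS -> Q \in SS -> P != Q -> [disjoint P & Q].
Proof.
move: HS; rewrite inE => /andP[_ /forallP H2] PS QS PQ.
move: (H2 P); rewrite PS => /forallP /(_ Q); by rewrite QS PQ.
Qed.

Lemma SIF_pair P : P \in SS -> [seq val x | x <- enum P] = [:: plo P; phi P].
Proof.
move=> PS; have := SIF_card PS; rewrite cardE /plo /phi.
by case: (enum P) => [|x [|y [|]]].
Qed.

Lemma SIF_lohi P : P \in SS -> (plo P != phi P) && (plo P < n)%N && (phi P < n)%N.
Proof.
move=> PS; have := SIF_pair PS => E.
have U : uniq [seq val x | x <- enum P] by rewrite (map_inj_uniq val_inj) enum_uniq.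
rewrite E /= inE andbT in U; rewrite U /=.
have Hl : forall z, z \in [seq val x | x <- enum P] -> (z < n)%N.
  by move=> z /mapP[x _ ->]; exact: ltn_ord.
by rewrite !Hl // E !inE eqxx ?orbT.
Qed.

Lemma SIF_mem P b : P \in SS -> (b \in [:: plo P; phi P]) = [exists x in P, val x == b].
Proof.
move=> PS; rewrite -SIF_pair //; apply/mapP/existsP => [[x xP ->]|[x /andP[xP /eqP <-]]].
  by exists x; rewrite -mem_enum xP eqxx.
by exists x; rewrite ?mem_enum.
Qed.

Lemma count_cov (b : nat) : count (fun P : {set 'I_n} => [exists x in P, val x == b]) (enum SS) = covered SS b.
Proof.
have le1 : (count (fun P : {set 'I_n} => [exists x in P, val x == b]) (enum SS) <= 1)%N.
  apply: count_le1; first exact: enum_uniq.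
  move=> P Q; rewrite !mem_enum => PS QS /existsP[x /andP[xP /eqP xb]] /existsP[y /andP[yQ /eqP yb]].
  apply/eqP; apply/negP => /negP PQ.
  have xy : x = y by apply: val_inj; rewrite xb yb.
  by have := disjointFr (SIF_disj PS QS PQ) xP; rewrite xy yQ.
have hc : has (fun P : {set 'I_n} => [exists x in P, val x == b]) (enum SS) = covered SS b.
  apply/hasP/existsP => [[P PS HP]|[P /andP[PS HP]]].
    by exists P; rewrite -mem_enum PS.
  by exists P; rewrite ?mem_enum.
move: hc; rewrite has_count; case: (covered SS b) => /= h.
  by apply/eqP; rewrite eqn_leq le1 h.
by move: h; rewrite lt0n => /negbFE/eqP.
Qed.

Lemma covered_lt (b : nat) : covered SS b -> (b < n)%N.
Proof. case/existsP => P /andP[_ /existsP[x /andP[_ /eqP <-]]]; exact: ltn_ord. Qed.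

End Comb.

Definition fac := ((nat * nat) + nat)%type.
Definition fval (J : seq lpair) (x : fac) : Q :=
  match x with inl kl => cls (Dpair J kl.1 kl.2) | inr j => Fq (nth p0 J j) end.
Definition fsupp (x : fac) : seq nat :=
  match x with inl kl => [:: kl.1; kl.2] | inr j => [:: j] end.
Definition flist n (SS : {set {set 'I_n}}) : seq fac :=
  [seq (inl (plo P, phi P) : fac) | P <- enum SS] ++
  [seq (inr j : fac) | j <- iota 0 n & ~~ covered SS j].

Definition omegaN n (J : seq lpair) : Q :=
  \sum_(SS <- enum (SIF n)) C ((-1) ^+ ncross SS) * \prod_(x <- flist SS) fval J x.

Lemma omegaE J : cls (omega J) = omegaN (size J) J.
Proof.
rewrite /omega clsS big_map /omegaN; apply: eq_bigr => SS _.
by rewrite !clsM /dword !clsP_ big_cat !big_map.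
Qed.

Lemma count_flist n (SS : {set {set 'I_n}}) b : SS \in SIF n ->
  count (fun x => b \in fsupp x) (flist SS) = (b < n)%N.
Proof.
move=> HS; rewrite count_cat !count_map.
rewrite (@eq_in_count _ _ (fun P : {set 'I_n} => [exists x in P, val x == b])); last first.
  by move=> P; rewrite mem_enum => PS; rewrite /= (SIF_mem HS _ PS).
rewrite count_cov //.
rewrite (@eq_count _ _ (pred1 b)); last by move=> j; rewrite /= mem_seq1 eq_sym.
rewrite count_uniq_mem; last by rewrite filter_uniq // iota_uniq.
rewrite mem_filter mem_iota add0n /=.
case cov: (covered SS b) => /=; last by [].
by rewrite (covered_lt cov).
Qed.

Section Main.
Variables (I : seq lpair) (c : nat).
Hypothesis rs : r != s.
Hypothesis cI : (c <= size I)%N.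
Hypothesis H1 : forall b, (b < c)%N -> xorr (nth p0 I b) r.
Hypothesis H2 : forall b, (c <= b < size I)%N -> ((nth p0 I b).1 != r) && ((nth p0 I b).2 != r).

Lemma xorr_lt k : (k < size I)%N -> xorr (nth p0 I k) r = (k < c)%N.
Proof.
move=> kI; case: (ltnP k c) => kc; first exact: H1.
have /andP[/negbTE e1 /negbTE e2] := H2 (introT andP (conj kc kI)).
by rewrite /xorr e1 e2.
Qed.

Lemma nth_Ibsr_same b : nth p0 (Ibsr I b s r) b = repl_letter s r (nth p0 I b).
Proof. by rewrite /Ibsr nth_set_nth /= eqxx. Qed.

Lemma nth_Ibsr_diff b j : j != b -> nth p0 (Ibsr I b s r) j = nth p0 I j.
Proof. by rewrite /Ibsr nth_set_nth /= => /negbTE ->. Qed.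

Lemma C1M q : C 1 * q = q. Proof. by rewrite cls1 mul1r. Qed.

Lemma Hfac1 n (SS : {set {set 'I_n}}) x : size I = n -> SS \in SIF n -> x \in flist SS ->
  ad (fval I x) = \sum_(b <- iota 0 c | b \in fsupp x) fval (Ibsr I b s r) x.
Proof.
move=> nI HS; rewrite mem_cat => /orP[/mapP[P PS ->]|/mapP[j jF ->]] /=.
  rewrite mem_enum in PS.
  have /andP[/andP[kl kn] ln] := SIF_lohi HS PS.
  have kn' : (plo P < size I)%N by rewrite nI.
  have ln' : (phi P < size I)%N by rewrite nI.
  rewrite sum_in2 ?iota_uniq // !mem_iota !add0n /=.
  rewrite /Dpair /= !clsM adDq //.
  have lk : phi P != plo P by rewrite eq_sym.
  rewrite !nth_Ibsr_same (nth_Ibsr_diff kl) (nth_Ibsr_diff lk).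
  rewrite !xorr_lt //.
  by case: (plo P < c)%N; case: (phi P < c)%N; rewrite /= ?mulr1n ?mulr0n ?C1M ?cls0 ?mul0r ?add0r ?addr0.
rewrite mem_filter mem_iota add0n in jF; case/andP: jF => _ jn.
have jI : (j < size I)%N by rewrite nI.
rewrite sum_in1 ?iota_uniq // mem_iota add0n /=.
case: (ltnP j c) => jc.
  by rewrite nth_Ibsr_same /Fq adFq //; exact: H1.
have /andP[e1 e2] := H2 (introT andP (conj jc jI)).
by rewrite /Fq adFq0.
Qed.

Lemma Hfac2 n (SS : {set {set 'I_n}}) x : x \in flist SS ->
  forall b, b \notin fsupp x -> fval (Ibsr I b s r) x = fval I x.
Proof.
move=> _ b; case: x => [[k l]|j] /=.
  rewrite !inE negb_or => /andP[h1 h2].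
  rewrite eq_sym in h1; rewrite eq_sym in h2.
  by rewrite /Dpair /= (nth_Ibsr_diff h1) (nth_Ibsr_diff h2).
rewrite mem_seq1 eq_sym => h.
by rewrite (nth_Ibsr_diff h).
Qed.

Lemma ad_flist n (SS : {set {set 'I_n}}) : size I = n -> SS \in SIF n ->
  ad (\prod_(x <- flist SS) fval I x) =
  \sum_(b <- iota 0 c) \prod_(x <- flist SS) fval (Ibsr I b s r) x.
Proof.
move=> nI HS.
rewrite (@ad_prod _ fval fsupp I (fun b => Ibsr I b s r) (iota 0 c) (flist SS)).
- rewrite big_seq_cond [RHS]big_seq_cond; apply: eq_bigl => b.
  case bL: (b \in iota 0 c) => //=.
  rewrite has_count count_flist // lt0b.
  move: bL; rewrite mem_iota add0n => bc.
  by apply: leq_trans bc _; rewrite -nI.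
- by move=> x xF; apply: Hfac1 xF.
- by move=> x xF; apply: Hfac2 xF.
- by move=> b; rewrite count_flist // leq_b1.
Qed.

End Main.

Lemma main_Q (I : seq lpair) (c : nat) : r != s -> (c <= size I)%N ->
  (forall b, (b < c)%N -> xorr (nth p0 I b) r) ->
  (forall b, (c <= b < size I)%N -> ((nth p0 I b).1 != r) && ((nth p0 I b).2 != r)) ->
  ad (cls (omega I)) = \sum_(b <- iota 0 c) cls (omega (Ibsr I b s r)).
Proof.
move=> rs cI H1 H2.
rewrite omegaE /omegaN ad_sum.
transitivity (\sum_(b <- iota 0 c) omegaN (size I) (Ibsr I b s r)).
  rewrite /omegaN exchange_big /=; apply: eq_big_seq => SS; rewrite mem_enum => HS.
  by rewrite adCM (@ad_flist I c) // mulr_sumr.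
apply: eq_big_seq => b; rewrite mem_iota add0n => bc.
rewrite omegaE (_ : size (Ibsr I b s r) = size I) //.
by rewrite /Ibsr size_set_nth; apply/maxn_idPr; apply: leq_trans cI.
Qed.

End Quot.
Local Close Scope ring_scope.

Theorem theorem5p8 (I : seq lpair) (c : nat) (r s : letter) :
  r != s ->
  c <= size I ->
  (forall b, b < c -> ((nth p0 I b).1 == r) (+) ((nth p0 I b).2 == r)) ->
  (forall b, c <= b < size I -> ((nth p0 I b).1 != r) && ((nth p0 I b).2 != r)) ->
  ueq s r (tsub (tmul Xg (omega I)) (tmul (omega I) Xg))
          (tsum [seq omega (Ibsr I b s r) | b <- iota 0 c]).
Proof.
move=> rs cI H1 H2.
apply: (@clsK s r).
rewrite clsB !clsM clsS big_map.
exact: main_Q.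
Qed.
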